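(* Let $G=(V,E)$ be a threshold graph. An edge $e\in E$ is threshold-safe (i.e., $G-e$ is a threshold graph) if and only if $e$ is neither the middle edge of an induced diamond nor a side edge of an induced paw in $G$.
   Context: A graph $G=(V,E)$ is threshold if there exist a labeling $\ell:V\to\mathbb{N}_0$ and $t\in\mathbb{N}_0$ such that $X\subseteq V$ is independent iff $\sum_{x\in X}\ell(x)\le t$. A diamond is $K_4$ minus an edge; its middle edge joins its two degree-3 vertices. A paw is the graph on $\{a,b,c,d\}$ with edges $ab,bc,cd,bd$; its side edges are $bc$ and $bd$. *)

(* Defs.v *)
From mathcomp Require Import all_boot.
Set Implicit Arguments. Unset Strict Implicit. Unset Printing Implicit Defensive.

Definition simple_graph (V : finType) (g : rel V) : Prop :=
  symmetric g /\ irreflexive g.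

Definition independent (V : finType) (g : rel V) (X : {set V}) : bool :=
  [forall x in X, forall y in X, ~~ g x y].

Definition threshold (V : finType) (g : rel V) : Prop :=
  exists (l : V -> nat) (t : nat),
    forall X : {set V}, independent g X <-> (\sum_(x in X) l x <= t).

Definition remove_edge (V : finType) (g : rel V) (u v : V) : rel V :=
  fun x y => g x y && ~~ (((x == u) && (y == v)) || ((x == v) && (y == u))).

Definition diamond_middle (V : finType) (g : rel V) (u v : V) : Prop :=
  exists a b : V,
    [/\ uniq [:: u; v; a; b],
        [&& g u v, g u a, g u b, g v a & g v b] & ~~ g a b].

(* Paw on {a,b,c,d} with edges ab, bc, cd, bd (induced: ac, ad non-edges);
   side edges bc and bd.  By the symmetry c<->d it suffices that the edge is
   {b,c} for some such labelling; the edge is unordered, so both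
   orientations (u,v) = (b,c) or (c,b) are allowed. *)
Definition paw_side_oriented (V : finType) (g : rel V) (b c : V) : Prop :=
  exists a d : V,
    [/\ uniq [:: a; b; c; d],
        [&& g a b, g b c, g c d & g b d] & ~~ g a c && ~~ g a d].

Definition paw_side (V : finType) (g : rel V) (u v : V) : Prop :=
  paw_side_oriented g u v \/ paw_side_oriented g v u.

(* Main.v *)
Require Import Defs.
From mathcomp Require Import all_boot.
From mathcomp Require Import zify.
Set Implicit Arguments. Unset Strict Implicit. Unset Printing Implicit Defensive.

Section Gen.
Variables (V : finType) (h : rel V).
Hypotheses (hsym : symmetric h) (hirr : irreflexive h).

Lemma independentP (X : {set V}) :
  reflect (forall x y, x \in X -> y \in X -> ~~ h x y) (independent h X).
Proof.
apply: (iffP forall_inP) => [H x y xX yX | H x xX].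
  by move/forall_inP: (H x xX); apply.
by apply/forall_inP => y yX; apply: H.
Qed.

Lemma sum_split (y : V) (X : {set V}) (F : V -> nat) :
  \sum_(x in X) F x = (if y \in X then F y else 0) + \sum_(x in X :\ y) F x.
Proof.
case: (boolP (y \in X)) => yX.
  rewrite (bigD1 y yX) /=; congr (_ + _); apply: eq_bigl => x.
  by rewrite !inE andbC.
rewrite add0n; apply: eq_bigl => x; rewrite !inE.
by case: eqP => // ->; rewrite (negbTE yX).
Qed.

Definition nested := forall x z, x != z ->
  (forall y, y != z -> h x y -> h z y) \/ (forall y, y != x -> h z y -> h x y).

Hypothesis hnest : nested.

Lemma iso_or_dom (S : {set V}) x0 : x0 \in S ->
  exists y, y \in S /\ ((forall z, z \in S -> ~~ h y z) \/
                        (forall z, z \in S -> z != y -> h y z)).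
Proof.
move=> x0S.
case: (arg_maxnP (fun w => #|[set z in S | h w z]|) x0S) => x xS xmax.
case: (boolP [forall z in S, (z != x) ==> h x z]) => [/forall_inP Hd | ].
  exists x; split => //; right => z zS zx.
  by move/implyP: (Hd z zS); apply.
rewrite negb_forall_in => /existsP [y /andP [yS]].
rewrite negb_imply => /andP [yx hxy].
exists y; split => //; left => z zS; apply/negP => hyz.
have zx : z != x.
  by apply/eqP => ezx; move: hxy; rewrite -ezx hsym hyz.
have xz : x != z by rewrite eq_sym.
case: (hnest xz) => [H1 | H2]; last first.
  by move: hxy; rewrite (H2 y yx _) // hsym.
set Nx := [set w in S | h x w]; set Nz := [set w in S | h z w].
have sub : y |: (Nx :\ z) \subset Nz :\ x.
  apply/subsetP => w; rewrite !inE => /orP [/eqP -> | /andP [wz /andP [wS hxw]]].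
    by rewrite yx yS /= hsym.
  apply/andP; split; last by rewrite wS (H1 w wz hxw).
  by apply/eqP => ewx; move: hxw; rewrite ewx hirr.
have := subset_leq_card sub.
rewrite cardsU1 !inE negb_and negb_and hxy !orbT add1n.
have e1 := cardsD1 z Nx; have e2 := cardsD1 x Nz.
have ezx : (z \in Nx) = (x \in Nz) by rewrite /Nx /Nz !inE zS (xS : x \in S) hsym.
have := xmax z zS.
rewrite -/Nx -/Nz => hle hlt.
move: hle; rewrite e1 e2 ezx; lia.
Qed.

Definition thr_on (S : {set V}) := exists (l : V -> nat) (t : nat),
  forall X : {set V}, X \subset S -> (independent h X <-> \sum_(x in X) l x <= t).

Lemma thr_on0 S : S = set0 -> thr_on S.
Proof.
move=> ->; exists (fun _ => 0), 0 => X XS; split => _; first by rewrite big1.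
apply/independentP => p q pX; have := subsetP XS p pX; by rewrite inE.
Qed.

Lemma indep_sub (X Y : {set V}) : Y \subset X -> independent h X -> independent h Y.
Proof.
move=> /subsetP YX /independentP H; apply/independentP => p q pY qY.
by apply: H; apply: YX.
Qed.

Lemma thr_on_ind n (S : {set V}) : #|S| <= n -> thr_on S.
Proof.
elim: n S => [|n IH] S hS; rewrite /thr_on.
  by apply: thr_on0; apply/eqP; rewrite -cards_eq0; lia.
case: (set_0Vmem S) => [-> | [x0 x0S]]; first by apply: thr_on0.
have [y [yS Hy]] := iso_or_dom x0S.
have [l [t Hl]] : thr_on (S :\ y).
  apply: IH; move: hS; rewrite (cardsD1 y S) yS; lia.
case: Hy => [Hiso | Hdom].
- exists (fun x => if x == y then 0 else l x), t => X XS.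
  rewrite (sum_split y) eqxx if_same add0n.
  have -> : \sum_(x in X :\ y) (if x == y then 0 else l x) = \sum_(x in X :\ y) l x.
    by apply: eq_bigr => x; rewrite !inE => /andP [/negbTE -> _].
  rewrite -Hl; last by apply: setSD.
  split; first by apply: indep_sub; apply: subD1set.
  move/independentP => H; apply/independentP => p q pX qX.
  have pS := subsetP XS p pX; have qS := subsetP XS q qX.
  case: (eqVneq p y) => [-> | py]; first by apply: Hiso.
  case: (eqVneq q y) => [-> | qy]; first by rewrite hsym; apply: Hiso.
  by apply: H; rewrite !inE ?py ?qy.
- set N := #|V|.+1.
  set t' := N * t + #|V|.
  exists (fun x => if x == y then t' else N * l x + 1), t' => X XS.
  rewrite (sum_split y) eqxx.
  have -> : \sum_(x in X :\ y) (if x == y then t' else N * l x + 1)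
            = N * \sum_(x in X :\ y) l x + #|X :\ y|.
    rewrite -sum1_card big_distrr -big_split /=.
    by apply: eq_bigr => x; rewrite !inE => /andP [/negbTE -> _].
  case: (boolP (y \in X)) => yX.
    case: (set_0Vmem (X :\ y)) => [E | [z zX]].
      rewrite E big_set0 cards0 muln0 !addn0 leqnn; split => // _.
      apply/independentP => p q pX qX.
      have ep : p = y by apply/eqP; apply: contraT => py;
        rewrite -(in_set0 p) -E !inE py pX.
      have eq : q = y by apply/eqP; apply: contraT => qy;
        rewrite -(in_set0 q) -E !inE qy qX.
      by rewrite ep eq hirr.
    have c1 : 0 < #|X :\ y| by apply/card_gt0P; exists z.
    split; last by lia.
    move/independentP => H; move: zX; rewrite !inE => /andP [zy zX].
    have := H y z yX zX; rewrite Hdom //; by apply: (subsetP XS).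
  have XS' : X \subset S :\ y.
    apply/subsetP => p pX; rewrite !inE (subsetP XS p pX) andbT.
    by apply: contraNneq yX => <-.
  have eX : X :\ y = X.
    apply/setP => p; rewrite !inE; case: eqP => // ->; by rewrite (negbTE yX).
  rewrite add0n eX Hl //.
  have cX : #|X| <= #|V| by apply: max_card.
  rewrite /N; split => H; nia.
Qed.

End Gen.

Lemma nested_thr (V : finType) (h : rel V) :
  symmetric h -> irreflexive h -> nested h -> threshold h.
Proof.
move=> hs hi hn; have [l [t H]] := thr_on_ind hs hi hn (leqnn #|[set: V]|).
by exists l, t => X; apply: H; apply: subsetT.
Qed.

Lemma thr_pair (V : finType) (h : rel V) (l : V -> nat) (t : nat) :
  symmetric h -> irreflexive h ->
  (forall X : {set V}, independent h X <-> \sum_(x in X) l x <= t) ->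
  forall p q, p != q -> h p q = (t < l p + l q).
Proof.
move=> hs hi H p q pq.
have := H [set p; q].
rewrite big_setU1 ?big_set1 /=; last by rewrite inE.
move=> Hi; rewrite ltnNge; apply/idP/idP.
  move=> hpq; apply/negP => /Hi /independentP /(_ p q).
  by rewrite !inE !eqxx orbT hpq => /(_ erefl erefl).
move=> hn; apply: contraNT hn => hpq; apply/Hi/independentP => a b.
rewrite !inE => /orP [] /eqP -> /orP [] /eqP ->; rewrite ?hi //; by rewrite hs.
Qed.

Lemma remove_sym (V : finType) (g : rel V) u v :
  symmetric g -> symmetric (remove_edge g u v).
Proof.
move=> hs x y; rewrite /remove_edge hs orbC.
by congr (_ && ~~ _); congr (_ || _); apply: andbC.
Qed.

Lemma remove_irr (V : finType) (g : rel V) u v :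
  irreflexive g -> irreflexive (remove_edge g u v).
Proof. by move=> hi x; rewrite /remove_edge hi. Qed.

Lemma uniq4 (T : eqType) (a b c d : T) :
  uniq [:: a; b; c; d] = [&& a != b, a != c, a != d, b != c, b != d & c != d].
Proof. by rewrite /= !inE !negb_or !andbT !andbA. Qed.

Lemma diamond_sym (V : finType) (g : rel V) u v :
  symmetric g -> diamond_middle g u v -> diamond_middle g v u.
Proof.
move=> hs [a [b [U /and5P [h1 h2 h3 h4 h5] h6]]]; exists a, b; split => //.
  move: U; rewrite !uniq4 (eq_sym u v) => /and3P [h7 h8 /and4P [h9 h10 h11 h12]].
  by rewrite h7 h8 h9 h10 h11 h12.
by rewrite hs h1 h2 h3 h4 h5.
Qed.

Ltac dist := rewrite uniq4;
  repeat match goal with H : is_true (?p != ?q) |- _ =>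
    rewrite ?H ?(eq_sym q p) ?H; clear H end; done.
Lemma key' (V : finType) (g : rel V) (l : V -> nat) t (x z a b : V) :
  symmetric g -> (forall p q, p != q -> g p q = (t < l p + l q)) ->
  x != z -> x != a -> x != b -> z != a -> z != b -> a != b ->
  g x a -> g z b -> ~~ g z a -> g x b ->
  ~ diamond_middle g x b -> ~ paw_side g x b -> False.
Proof.
move=> hs hp xz xa xb za zb ab gxa gzb gza gxb nd np.
case: (boolP (g x z)) => gxz; case: (boolP (g a b)) => gab.
- apply: nd; exists a, z; split; first by dist.
    by rewrite gxb gxa gxz -(hs a) gab -(hs z) gzb.
  by rewrite hs.
- apply: np; left; exists a, z; split; first by dist.
    by rewrite hs gxa gxb -(hs z) gzb gxz.
  by rewrite gab hs.
- apply: np; right; exists z, a; split; first by dist.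
    by rewrite gzb hs gxb gxa -(hs a) gab.
  by rewrite (hs z x) (negbTE gxz) gza.
- move: gxa gzb gab gxz; rewrite !hp //; try by rewrite eq_sym.
  lia.
Qed.

Ltac symneq := repeat match goal with H : is_true (?p != ?q) |- _ =>
  lazymatch goal with
  | _ : is_true (q != p) |- _ => fail
  | _ => have : q != p by rewrite eq_sym
  end; move=> ? end.

Ltac neqs := repeat match goal with H : is_true (?p != ?q) |- _ =>
  move/negbTE: H => ? end;
  repeat match goal with H : (_ == _) = false |- _ => rewrite H end.

Ltac rem_simp := rewrite /remove_edge ?eqxx /=; neqs; rewrite /= ?andbT ?andbF.

Lemma half (V : finType) (g : rel V) (l : V -> nat) t (u v x z a b : V) :
  symmetric g -> (forall p q, p != q -> g p q = (t < l p + l q)) -> g u v ->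
  ~ diamond_middle g u v -> ~ paw_side g u v ->
  x != z -> x != a -> x != b -> z != a -> z != b -> a != b ->
  g x a -> g z b -> ~~ remove_edge g u v z a ->
  ((x == u) && (b == v)) || ((x == v) && (b == u)) -> False.
Proof.
move=> hs hp guv nd np xz xa xb za zb ab gxa gzb hza.
have gza : forall u' v', ((x == u') && (b == v')) || ((x == v') && (b == u')) ->
    ~~ remove_edge g u' v' z a -> ~~ g z a.
  move=> u' v' /orP [] /andP [/eqP <- /eqP <-]; rewrite /remove_edge;
  rewrite (eq_sym z x) (negbTE xz) (negbTE zb) /= ?andbF ?andbT //.
case/orP => /andP [/eqP ex /eqP eb].
  subst u v.
  apply: (key' hs hp xz xa xb za zb ab gxa gzb _ guv nd np).
  apply: (gza x b); by rewrite ?eqxx.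
subst u v.
apply: (key' hs hp xz xa xb za zb ab gxa gzb _ _ _ _).
- by apply: (gza b x) => //; rewrite !eqxx orbT.
- by rewrite hs.
- by move/(diamond_sym hs).
- by case => H; apply: np; [right | left].
Qed.

Theorem lemma4p3 (V : finType) (g : rel V) (u v : V) :
  simple_graph g -> threshold g -> g u v ->
  (threshold (remove_edge g u v) <-> ~ diamond_middle g u v /\ ~ paw_side g u v).
Proof.
move=> [hs hi] [l [t Hl]] guv.
have hp := thr_pair hs hi Hl.
have uv : u != v by apply: contraTneq guv => ->; rewrite hi.
split.
  move=> [l' [t' Hl']].
  have hp' := thr_pair (remove_sym u v hs) (remove_irr u v hi) Hl'.
  split.
    case=> a [b [U /and5P [h1 h2 h3 h4 h5] h6]].
    move: U; rewrite uniq4 => /and3P [_ ua /and4P [ub va vb ab]].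
    symneq.
    have := hp' u v uv; have := hp' u a ua; have := hp' v b vb;
    have := hp' a b ab; have := hp' u b ub; have := hp' v a va.
    rem_simp.
    rewrite h2 h3 h4 h5 (negbTE h6).
    move=> /esym e1 /esym e2 /esym/negbT e3 /esym e4 /esym e5 /esym/negbT e6.
    move: e1 e2 e3 e4 e5 e6; rewrite -!leqNgt; clear; lia.
  case.
    move=> [a [d [U /and4P [h1 h2 h3 h4] /andP [h5 h6]]]].
    move: U; rewrite uniq4 => /and3P [ab ac /and4P [ad bc bd cd]]; symneq.
    have := hp' u v bc; have := hp' a v ac; have := hp' a d ad;
    have := hp' a u ab; have := hp' v d cd.
    rem_simp; rewrite ?h1 ?h3 (negbTE h5) (negbTE h6).
    move=> /esym e1 /esym e2 /esym/negbT e3 /esym/negbT e4 /esym/negbT e5.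
    move: e1 e2 e3 e4 e5; rewrite -!leqNgt; clear; lia.
  move=> [a [d [U /and4P [h1 h2 h3 h4] /andP [h5 h6]]]].
    move: U; rewrite uniq4 => /and3P [ab ac /and4P [ad bc bd cd]]; symneq.
    have := hp' v u bc; have := hp' a u ac; have := hp' a d ad;
    have := hp' a v ab; have := hp' u d cd.
    rem_simp; rewrite ?h1 ?h3 (negbTE h5) (negbTE h6).
    move=> /esym e1 /esym e2 /esym/negbT e3 /esym/negbT e4 /esym/negbT e5.
    move: e1 e2 e3 e4 e5; rewrite -!leqNgt; clear; lia.
move=> [nd np].
set h := remove_edge g u v.
have hsh : symmetric h := remove_sym u v hs.
have hih : irreflexive h := remove_irr u v hi.
apply: nested_thr => // x z xz.
case: (boolP [forall y, ((y != z) && h x y) ==> h z y]) => [/forallP H | ].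
  by left => y yz hxy; apply: (implyP (H y)); rewrite yz hxy.
move=> /forallPn [a]; rewrite negb_imply => /andP [/andP [az hxa] hza].
case: (boolP [forall y, ((y != x) && h z y) ==> h x y]) => [/forallP H | ].
  by right => y yx hzy; apply: (implyP (H y)); rewrite yx hzy.
move=> /forallPn [b]; rewrite negb_imply => /andP [/andP [bx hzb] hxb].
exfalso.
have xa : x != a by apply: contraTneq hxa => ->; rewrite hih.
have zb : z != b by apply: contraTneq hzb => ->; rewrite hih.
have ab : a != b by apply: contraNneq hza => ->.
have za : z != a by rewrite eq_sym.
have xb : x != b by rewrite eq_sym.
have gxa : g x a by move: hxa; rewrite /h /remove_edge => /andP [].
have gzb : g z b by move: hzb; rewrite /h /remove_edge => /andP [].
case: (boolP (((x == u) && (b == v)) || ((x == v) && (b == u)))) => cxb.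
  exact: (half hs hp guv nd np xz xa xb za zb ab gxa gzb hza cxb).
case: (boolP (((z == u) && (a == v)) || ((z == v) && (a == u)))) => cza.
  have zx : z != x by rewrite eq_sym.
  have ba : b != a by rewrite eq_sym.
  exact: (half hs hp guv nd np zx zb za xb xa ba gzb gxa hxb cza).
move: hza hxb; rewrite /h /remove_edge (negbTE cxb) (negbTE cza) !andbT.
move: gxa gzb; rewrite !hp // => e1 e2 e3 e4.
move: e1 e2 e3 e4; rewrite -!leqNgt; clear; lia.
Qed.
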